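(* Let $C>0$, $\epsilon\ge0$, and let $(\hat f,\bar\lambda)\in\Delta(\mathcal{H})\times\Lambda_C$ be an $\epsilon$-approximate equilibrium of the $C$-bounded minimax game $\min_{f\in\Delta(\mathcal{H})}\max_{\lambda\in\Lambda_C}\mathcal{L}_{\mathcal{D}}(f,\lambda)$. Then $\mathbb{E}_{h\sim\hat f}\mathbb{E}_{\mathcal{D}}[\sum_{\mathbf a\in\mathcal{A}}u(\mathbf a,y)b(h(x),\mathbf a)]\ge\mathrm{OPT}(\mathcal{H},\mathcal{D},\gamma)-2\epsilon$ and $\mathrm{DecCE}(\hat f)\le\gamma+\frac{1+2\epsilon}{C}$.
   Context: Data $(x,y)\in\mathcal{X}\times[-1,1]^d$ drawn from $\mathcal{D}$; $\mathcal{H}$ a class of functions $h:\mathcal{X}\to[-1,1]^d$. Receivers $i\in[N]$ have finite action sets $\mathcal{A}_i$, $|\mathcal{A}_i|=m$, utilities $v_i:\mathcal{A}_i\times[-1,1]^d\to[0,1]$; $b_i(z,a)=1$ if $a=\arg\max_{a'}v_i(a',z)$ (fixed tie-breaking), else $0$; $b(z,\mathbf a)=\prod_ib_i(z,a_i)$, $\mathcal{A}=\prod_i\mathcal{A}_i$; sender utility $u:\mathcal{A}\times[-1,1]^d\to[0,1]$. $\mathrm{DecCE}(f)=\max_{i,j,a\in\mathcal{A}_i}|\mathbb{E}_{h\sim f}\mathbb{E}_{\mathcal{D}}[(y_j-h(x)_j)b_i(h(x),a)]|$; $\mathrm{OPT}(\mathcal{H},\mathcal{D},\gamma)=\sup\{\mathbb{E}_{h\sim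 f}\mathbb{E}_{\mathcal{D}}[\sum_{\mathbf a}u(\mathbf a,y)b(h(x),\mathbf a)]:f\in\Delta(\mathcal{H}),\mathrm{DecCE}(f)\le\gamma\}$, where $\gamma\ge0$ is such that the feasible set is nonempty. Index set $I=\{(s,i,j,a):s\in\{\pm1\},i\in[N],j\in[d],a\in\mathcal{A}_i\}$, $\Lambda_C=\{\lambda\in\mathbb{R}_{\ge0}^I:\|\lambda\|_1\le C\}$, and $\mathcal{L}_{\mathcal{D}}(f,\lambda)=-\mathbb{E}_{h\sim f}\mathbb{E}_{\mathcal{D}}[\sum_{\mathbf a}u(\mathbf a,y)b(h(x),\mathbf a)]+\sum_{(s,i,j,a)\in I}\lambda_{s,i,j,a}\big(s\,\mathbb{E}_{h\sim f}\mathbb{E}_{\mathcal{D}}[(h(x)_j-y_j)b_i(h(x),a)]-\gamma\big)$. $(\hat f,\bar\lambda)$ is an $\epsilon$-approximate equilibrium if $\mathcal{L}_{\mathcal{D}}(\hat f,\bar\lambda)\le\min_{f\in\Delta(\mathcal{H})}\mathcal{L}_{\mathcal{D}}(f,\bar\lambda)+\epsilon$ and $\mathcal{L}_{\mathcal{D}}(\hat f,\bar\lambda)\ge\max_{\lambda\in\Lambda_C}\mathcal{L}_{\mathcal{D}}(\hat f,\lambda)-\epsilon$. *)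

(* Defs.v *)
From HB Require Import structures.
From mathcomp Require Import all_boot all_order all_algebra.
From mathcomp Require Import all_classical all_reals all_analysis.
Set Implicit Arguments. Unset Strict Implicit. Unset Printing Implicit Defensive.
Import Order.TTheory GRing.Theory Num.Theory.
Local Open Scope ring_scope.
Local Open Scope classical_set_scope.

Section Game.
Context {R : realType} {dsp : measure_display} {Omega : measurableType dsp}
  {X : Type} (d N m : nat).

Definition predictor := X -> 'I_d -> R.
Definition profile := {ffun 'I_N -> 'I_m}.

(* finitely supported distribution over predictors: list of (h, weight) *)
Definition fdist := seq (predictor * R).

Definition in_simplex (H : set predictor) (f : fdist) : Prop :=
  (forall p, p \in f -> H p.1 /\ 0 <= p.2) /\ \sum_(p <- f) p.2 = 1.

Definition Eh (f : fdist) (g : predictor -> R) : R := \sum_(p <- f) p.2 * g p.1.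

Variables (D : probability Omega R) (xo : Omega -> X) (yo : Omega -> 'I_d -> R).

Definition ED (g : X -> ('I_d -> R) -> R) : R :=
  Rintegral D setT (fun w => g (xo w) (yo w)).

Variables (br : 'I_N -> ('I_d -> R) -> 'I_m)
  (u : profile -> ('I_d -> R) -> R).

Definition bi (i : 'I_N) (z : 'I_d -> R) (a : 'I_m) : R := (a == br i z)%:R.
Definition bjoint (z : 'I_d -> R) (a : profile) : R := \prod_(i < N) bi i z (a i).

Definition Usend (f : fdist) : R :=
  Eh f (fun h => ED (fun x y => \sum_(a : profile) u a y * bjoint (h x) a)).

Definition calib (f : fdist) (i : 'I_N) (j : 'I_d) (a : 'I_m) : R :=
  Eh f (fun h => ED (fun x y => (y j - h x j) * bi i (h x) a)).

Definition DecCE (f : fdist) : R :=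
  \big[Num.max/0]_(i < N) \big[Num.max/0]_(j < d) \big[Num.max/0]_(a < m)
     `|calib f i j a|.

Definition OPT (H : set predictor) (gamma : R) : R :=
  sup [set Usend f | f in [set f | in_simplex H f /\ DecCE f <= gamma]].

(* index set I = {+-1} x [N] x [d] x A_i ; sign s encoded as a bool (true = +1) *)
Definition Idx := (bool * 'I_N * 'I_d * 'I_m)%type.
Definition sgn (s : bool) : R := if s then 1 else -1.

Definition in_LambdaC (C : R) (lam : Idx -> R) : Prop :=
  (forall k, 0 <= lam k) /\ \sum_(k : Idx) lam k <= C.

Definition Lag (gamma : R) (f : fdist) (lam : Idx -> R) : R :=
  - Usend f + \sum_(k : Idx)
     lam k * (sgn k.1.1.1 *
       Eh f (fun h => ED (fun x y => (h x k.1.2 - y k.1.2) * bi k.1.1.2 (h x) k.2))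
       - gamma).

Definition approx_eq (H : set predictor) (gamma C eps : R)
  (fh : fdist) (lb : Idx -> R) : Prop :=
  (forall f, in_simplex H f -> Lag gamma fh lb <= Lag gamma f lb + eps) /\
  (forall lam, in_LambdaC C lam -> Lag gamma fh lam <= Lag gamma fh lb + eps).

End Game.

(* Main.v *)
Require Import Defs.
From HB Require Import structures.
From mathcomp Require Import all_boot all_order all_algebra.
From mathcomp Require Import all_classical all_reals all_analysis.
Import Order.TTheory GRing.Theory Num.Theory.
Local Open Scope ring_scope.
Local Open Scope classical_set_scope.
From mathcomp Require Import measurable_realfun lra.
Import HBNNSimple.
Lemma int_le1 (R : realType) (dsp : measure_display) (Omega : measurableType dsp) (P : probability Omega R) (g : Omega -> R) : (forall w, 0 <= g w <= 1) ->
  (\int[P]_(x in setT) (g x)%:E <= 1)%E.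
Proof.
move=> g01.
rewrite ge0_integralTE; last by move=> x; rewrite lee_fin; case/andP: (g01 x).
apply: ge_ereal_sup => _ [h hg <-].
rewrite -integralT_nnsfun.
apply: (@le_trans _ _ (\int[P]_(x in setT) (cst 1%E) x)%E).
  apply: ge0_le_integral => //.
  - by move=> x _; rewrite lee_fin.
  - by exact/measurable_EFinP/measurable_funPT.
  - by move=> x _; apply: le_trans (hg x) _; rewrite lee_fin; case/andP: (g01 x).
rewrite (@integral_cst _ _ _ P setT measurableT).
by rewrite mul1e; apply: probability_le1.
Qed.

Lemma Rint01 (R : realType) (dsp : measure_display) (Omega : measurableType dsp) (P : probability Omega R) (g : Omega -> R) : (forall w, 0 <= g w <= 1) ->
  0 <= Rintegral P setT g <= 1.
Proof.
move=> g01; rewrite /Rintegral.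
have h0 : (0 <= \int[P]_(x in setT) (g x)%:E)%E.
  by apply: integral_ge0 => x _; rewrite lee_fin; case/andP: (g01 x).
have h1 := @int_le1 R dsp Omega P g g01.
move: h0 h1; case: (\int[P]_(x in setT) (g x)%:E)%E => //= r.
by rewrite !lee_fin => -> ->.
Qed.

Lemma RintN (R : realType) (dsp : measure_display) (Omega : measurableType dsp) (P : probability Omega R) (g : Omega -> R) : Rintegral P setT (fun w => - g w) = - Rintegral P setT g.
Proof.
rewrite /Rintegral.
have [h|h] := boolP ((\int[P]_(x in setT) (fun w => (g w)%:E)^\+ x) +? (- (\int[P]_(x in setT) (fun w => (g w)%:E)^\- x)))%E.
  by rewrite -fineN -integralN.
move: h; rewrite negb_and !negbK => /orP[/andP[/eqP hp /eqP hn]|/andP[/eqP hp _]]; last first.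
  by have := @integral_ge0 _ _ _ P setT _ (fun x _ => funepos_ge0 (fun w => (g w)%:E) x); rewrite hp.
have hn' : (\int[P]_(x in setT) (fun w => (g w)%:E)^\- x)%E = +oo%E.
  by rewrite -(oppeK (\int[P]_(x in setT) (fun w => (g w)%:E)^\- x)%E) hn.
have e0 : (fun x => (- g x)%:E) = (\- (fun w => (g w)%:E))%E.
  by apply/funext => x; rewrite /= EFinN.
rewrite integralE [in RHS]integralE e0 funeposN funenegN hp hn'.
by rewrite [(_ - _)%E]/= oppr0.
Qed.

Lemma bigmax_le_ (R : realType) n (F : 'I_n -> R) B : 0 <= B -> (forall i, F i <= B) ->
  \big[Num.max/0]_(i < n) F i <= B.
Proof. by move=> B0 FB; elim/big_ind: _ => // x y hx hy; rewrite ge_max hx hy. Qed.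

Lemma le_bigmax_ (R : realType) n (F : 'I_n -> R) i : F i <= \big[Num.max/0]_(i < n) F i.
Proof. by rewrite (bigD1 i) //= le_max lexx. Qed.
Arguments le_bigmax_ {R n}.
Arguments bigmax_le_ {R n}.

Theorem lemma2 (R : realType) (dsp : measure_display) (Omega : measurableType dsp)
  (X : Type) (d N m : nat)
  (D : probability Omega R) (xo : Omega -> X) (yo : Omega -> 'I_d -> R)
  (Dy : forall w j, -1 <= yo w j <= 1)
  (H : set (X -> 'I_d -> R))
  (Hbox : forall h, H h -> forall x j, -1 <= h x j <= 1)
  (v : 'I_N -> 'I_m -> ('I_d -> R) -> R)
  (v01 : forall i a z, 0 <= v i a z <= 1)
  (br : 'I_N -> ('I_d -> R) -> 'I_m)
  (br_max : forall i z a, v i a z <= v i (br i z) z)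
  (u : {ffun 'I_N -> 'I_m} -> ('I_d -> R) -> R)
  (u01 : forall a z, 0 <= u a z <= 1)
  (gamma C eps : R) (gamma_ge0 : 0 <= gamma)
  (feasible : exists f, in_simplex H f /\ DecCE D xo yo br f <= gamma)
  (C_gt0 : 0 < C) (eps_ge0 : 0 <= eps)
  (fh : seq ((X -> 'I_d -> R) * R)) (lb : (bool * 'I_N * 'I_d * 'I_m)%type -> R)
  (fh_in : in_simplex H fh) (lb_in : in_LambdaC C lb)
  (eq : approx_eq D xo yo br u H gamma C eps fh lb) :
  Usend D xo yo br u fh >= OPT D xo yo br u H gamma - 2 * eps /\
  DecCE D xo yo br fh <= gamma + (1 + 2 * eps) / C.
Proof.
have Ug : forall (z : 'I_d -> R) (y : 'I_d -> R),
    0 <= \sum_(a : {ffun 'I_N -> 'I_m}) u a y * \prod_(i < N) ((a i == br i z)%:R) <= 1.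
  move=> z y; rewrite (bigD1 [ffun i => br i z]) //= [X in _ + X]big1.
    rewrite addr0 big1 ?mulr1 ?u01 // => i _; by rewrite ffunE eqxx.
  move=> a ne; case: (pickP (fun i => a i != br i z)) => [i hi|all].
    by rewrite (bigD1 i) //= (negbTE hi) mul0r mulr0.
  exfalso; move/negP: ne; apply; apply/eqP/ffunP => i; rewrite ffunE.
  by have := all i; move/negbFE/eqP.
have Ufh1 : Usend D xo yo br u fh <= 1.
  rewrite /Usend /Eh /ED /bjoint /bi; case: fh_in => hw hs.
  rewrite -[X in _ <= X]hs big_seq_cond [X in _ <= X]big_seq_cond.
  apply: ler_sum => p /andP[pin _]; apply: ler_piMr; first by case: (hw p pin).
  by case/andP: (@Rint01 _ _ _ D _ (fun w => Ug (p.1 (xo w)) (yo w))).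
have Uge0 : forall f, in_simplex H f -> 0 <= Usend D xo yo br u f.
  move=> f [hw _]; rewrite /Usend /Eh /ED /bjoint /bi big_seq.
  apply: sumr_ge0 => p pin; apply: mulr_ge0; first by case: (hw p pin).
  by case/andP: (@Rint01 _ _ _ D _ (fun w => Ug (p.1 (xo w)) (yo w))).
have calN : forall f i j a,
    Eh f (fun h => ED D xo yo (fun x y => (h x j - y j) * bi br i (h x) a))
    = - calib D xo yo br f i j a.
  move=> f i j a; rewrite /calib /Eh -sumrN; apply: eq_bigr => p _.
  rewrite -mulrN; congr (_ * _); rewrite /ED -RintN; congr (Rintegral _ _ _).
  by apply/funext => w; rewrite -mulNr opprB.
have LagE : forall f lam, Lag D xo yo br u gamma f lam = - Usend D xo yo br u f +
    \sum_(k : (bool * 'I_N * 'I_d * 'I_m)%type)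
      lam k * (sgn k.1.1.1 * (- calib D xo yo br f k.1.1.2 k.1.2 k.2) - gamma).
  by move=> f lam; rewrite /Lag; congr (_ + _); apply: eq_bigr => k _; rewrite calN.
have hc : forall f i j a, `|calib D xo yo br f i j a| <= DecCE D xo yo br f.
  move=> f i j a; rewrite /DecCE.
  apply: le_trans _ (le_bigmax_ (fun i => \big[Num.max/0]_(j < d) \big[Num.max/0]_(a < m)
     `|calib D xo yo br f i j a|) i).
  apply: le_trans _ (le_bigmax_ (fun j => \big[Num.max/0]_(a < m)
     `|calib D xo yo br f i j a|) j).
  exact: (le_bigmax_ (fun a => `|calib D xo yo br f i j a|) a).
case: eq => eq1 eq2.
have Lbar_le : forall f, in_simplex H f -> DecCE D xo yo br f <= gamma ->
    Lag D xo yo br u gamma fh lb <= - Usend D xo yo br u f + eps.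
  move=> f fin fdec; apply: le_trans (eq1 f fin) _; rewrite lerD2r LagE.
  rewrite -[X in _ <= X]addr0 lerD2l -oppr_ge0 -sumrN; apply: sumr_ge0 => k _.
  rewrite oppr_ge0; apply: mulr_ge0_le0; first by case: lb_in.
  rewrite subr_le0; apply: le_trans _ fdec; apply: le_trans _ (hc f k.1.1.2 k.1.2 k.2).
  case: (k.1.1.1); rewrite /sgn; first by rewrite mul1r -normrN ler_norm.
  by rewrite mulN1r opprK ler_norm.
have Lbar_ge : - Usend D xo yo br u fh - eps <= Lag D xo yo br u gamma fh lb.
  have lam0 : @in_LambdaC R d N m C (fun _ => 0).
    by split => // ; rewrite big1 // ltW.
  have := eq2 _ lam0; rewrite LagE big1 ?addr0; last by move=> k _; rewrite mul0r.
  by rewrite lerBlDr.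
have [fs [fs_in fs_dec]] := feasible.
split.
  rewrite lerBlDr /OPT; apply: ge_sup.
    by exists (Usend D xo yo br u fs); exists fs.
  move=> _ [f [fin fdec] <-].
  have := Lbar_le f fin fdec; move: Lbar_ge; lra.
have B0 : 0 <= gamma + (1 + 2 * eps) / C.
  by apply: addr_ge0 => //; apply: divr_ge0; [lra | exact: ltW].
have Usf := Uge0 fs fs_in.
have Lfs := Lbar_le fs fs_in fs_dec.
rewrite /DecCE; apply: bigmax_le_ => // i; apply: bigmax_le_ => // j.
apply: bigmax_le_ => // a.
set c := calib D xo yo br fh i j a.
have hs : forall s : bool, C * (sgn s * (- c) - gamma) <= 1 + 2 * eps.
  move=> s.
  pose lam := fun k : (bool * 'I_N * 'I_d * 'I_m)%type => if k == (s, i, j, a) then C else 0.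
  have lamin : @in_LambdaC R d N m C lam.
    split; first by move=> k; rewrite /lam; case: ifP => _ //; exact: ltW.
    rewrite (bigD1 (s, i, j, a)) //= big1 ?addr0 /lam ?eqxx // => k /negbTE hk.
    by rewrite hk.
  have e : Lag D xo yo br u gamma fh lam = - Usend D xo yo br u fh + C * (sgn s * (- c) - gamma).
    rewrite LagE (bigD1 (s, i, j, a)) //= [X in _ + (_ + X)]big1 ?addr0 /lam ?eqxx //.
    by move=> k /negbTE hk; rewrite hk mul0r.
  have := eq2 lam lamin; rewrite e.
  set t := C * _; move: Lfs Usf Ufh1; lra.
have hT := hs true; have hF := hs false; rewrite /sgn in hT hF.
rewrite mul1r in hT; rewrite mulN1r opprK in hF.
set B := (1 + 2 * eps) / C.
have CB : 1 + 2 * eps = C * B by rewrite /B [C * _]mulrC divfK // gt_eqF.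
rewrite CB in hT hF; rewrite ler_pM2l // in hT; rewrite ler_pM2l // in hF.
rewrite ler_norml; apply/andP; split; lra.
Qed.
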